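(* Let $\mathcal{C}_1,\mathcal{C}_2$ be small categories, $k$ a field, and $\theta:\mathcal{C}_1\to\mathcal{C}_2$ a covariant functor. If the overcategory $\theta/w$ is a discrete category for every $w\in\mathrm{Ob}\,\mathcal{C}_2$, then $$LK_\theta(C_*(\mathrm{Id}_{\mathcal{C}_1}/?))\cong C_*(\theta/?)\to LK_\theta(\underline{k})\to 0$$ is a projective resolution of the $k\mathcal{C}_2$-module $LK_\theta(\underline{k})\cong \mathrm{H}_0(|\theta/?|,k)$.
   Context: Modules over the category algebra $k\mathcal{C}$ are identified with functors $\mathcal{C}\to\mathrm{Vect}_k$; $\underline{k}$ is the constant functor with value $k$. For $\theta:\mathcal{C}_1\to\mathcal{C}_2$ and $w\in\mathrm{Ob}\,\mathcal{C}_2$, the overcategory $\theta/w$ has objects $(x,\alpha)$ with $x\in\mathrm{Ob}\,\mathcal{C}_1$, $\alpha\in\mathrm{Hom}_{\mathcal{C}_2}(\theta(x),w)$, and morphisms $\beta:(x,\alpha)\to(x',\alpha')$ with $\alpha=\alpha'\theta(\beta)$. $LK_\theta$ is the left Kan extension (left adjoint of restriction along $\theta$), $LK_\theta(M)(w)=\varinjlim_{\theta/w}M\circ\pi$ with $\pi(x,\alpha)=x$. $C_*(\theta/?)$ is the complex of $k\mathcal{C}_2$-modules whose value at $w$ is the simplicial chain complex of the nerve of $\theta/w$ ($C_n(\theta/w)$ has basis the $n$-chains of composable morphisms in $\theta/w$, differential the alternating sum of face maps), functorial in $w$ by postcomposition; for $\theta=\mathrm{Id}_{\mathcal{C}_1}$,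 $C_*(\mathrm{Id}_{\mathcal{C}_1}/?)\to\underline{k}$ is the standard projective resolution of $\underline{k}$. $\mathrm{H}_0(|\theta/?|,k)$ denotes the functor $w\mapsto \mathrm{H}_0(|\theta/w|,k)$, $|\cdot|$ the classifying space. *)

(* Defs.v *)
From HB Require Import structures.
From mathcomp Require Import all_boot all_algebra.
From mathcomp Require Import boolp finmap.
From mathcomp.multinomials Require Import monalg.
From Stdlib Require Import ProofIrrelevance.

Set Implicit Arguments.
Unset Strict Implicit.
Unset Printing Implicit Defensive.
Import GRing.Theory.
Local Open Scope ring_scope.

Record category := MkCat {
  Ob : Type;
  Hom : Ob -> Ob -> Type;
  idm : forall x, Hom x x;
  compm : forall x y z, Hom y z -> Hom x y -> Hom x z;
  comp1m : forall x y (f : Hom x y), compm (idm y) f = f;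
  compm1 : forall x y (f : Hom x y), compm f (idm x) = f;
  compA : forall x y z t (f : Hom x y) (g : Hom y z) (h : Hom z t),
      compm h (compm g f) = compm (compm h g) f }.
Arguments idm {c} x.
Arguments compm {c x y z} _ _.
Arguments Hom {c} _ _.

Record functor (C D : category) := Functor {
  fobj : Ob C -> Ob D;
  fmap : forall x y, @Hom C x y -> Hom (fobj x) (fobj y);
  fmap1 : forall x, fmap (idm x) = idm (fobj x);
  fmapM : forall x y z (f : Hom x y) (g : Hom y z),
      fmap (compm g f) = compm (fmap g) (fmap f) }.
Arguments fobj {C D} _ _.
Arguments fmap {C D} _ {x y} _.

Definition idF (C : category) : functor C C :=
  @Functor C C (fun x => x) (fun x y f => f) (fun x => erefl) (fun _ _ _ _ _ => erefl).

Definition discrete (D : category) : Prop :=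
  forall (a b : Ob D) (f : Hom a b),
    exists e : a = b, eq_rect a (fun c => Hom a c) (idm a) b e = f.

Definition overOb C1 C2 (th : functor C1 C2) (w : Ob C2) : Type :=
  {x : Ob C1 & Hom (fobj th x) w}.

Definition overHom C1 C2 (th : functor C1 C2) (w : Ob C2)
    (a b : overOb th w) : Type :=
  {beta : Hom (projT1 a) (projT1 b) | projT2 a = compm (projT2 b) (fmap th beta)}.

Lemma over_id_proof C1 C2 (th : functor C1 C2) w (a : overOb th w) :
  projT2 a = compm (projT2 a) (fmap th (idm (projT1 a))).
Proof. by rewrite fmap1 compm1. Qed.

Definition over_id C1 C2 (th : functor C1 C2) w (a : overOb th w) : overHom a a :=
  exist _ (idm (projT1 a)) (over_id_proof a).

Lemma over_comp_proof C1 C2 (th : functor C1 C2) w (a b c : overOb th w)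
    (g : overHom b c) (f : overHom a b) :
  projT2 a = compm (projT2 c) (fmap th (compm (proj1_sig g) (proj1_sig f))).
Proof.
case: f => f pf; case: g => g pg /=.
by rewrite fmapM compA -pg.
Qed.

Definition over_comp C1 C2 (th : functor C1 C2) w (a b c : overOb th w)
    (g : overHom b c) (f : overHom a b) : overHom a c :=
  exist _ (compm (proj1_sig g) (proj1_sig f)) (over_comp_proof g f).

Lemma sig_eq (A : Type) (P : A -> Prop) (u v : {a : A | P a}) :
  proj1_sig u = proj1_sig v -> u = v.
Proof.
case: u => a pa; case: v => b pb /= eab; subst b.
by rewrite (proof_irrelevance _ pa pb).
Qed.

Lemma over_comp1m C1 C2 (th : functor C1 C2) w (a b : overOb th w) (f : overHom a b) :
  over_comp (over_id b) f = f.
Proof. by apply: sig_eq; rewrite /= comp1m. Qed.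

Lemma over_compm1 C1 C2 (th : functor C1 C2) w (a b : overOb th w) (f : overHom a b) :
  over_comp f (over_id a) = f.
Proof. by apply: sig_eq; rewrite /= compm1. Qed.

Lemma over_compA C1 C2 (th : functor C1 C2) w (a b c d : overOb th w)
    (f : overHom a b) (g : overHom b c) (h : overHom c d) :
  over_comp h (over_comp g f) = over_comp (over_comp h g) f.
Proof. by apply: sig_eq; rewrite /= compA. Qed.

Definition overcat C1 C2 (th : functor C1 C2) (w : Ob C2) : category :=
  @MkCat (overOb th w) (@overHom C1 C2 th w) (@over_id C1 C2 th w)
       (@over_comp C1 C2 th w) (@over_comp1m C1 C2 th w)
       (@over_compm1 C1 C2 th w) (@over_compA C1 C2 th w).

Fixpoint chainFrom (D : category) (x : Ob D) (n : nat) : Type :=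
  match n with
  | 0 => unit
  | n'.+1 => {y : Ob D & (Hom x y * chainFrom y n')%type}
  end.

Definition chain (D : category) (n : nat) : Type := {x : Ob D & chainFrom x n}.

HB.instance Definition _ (D : category) (n : nat) := gen_eqMixin (chain D n).
HB.instance Definition _ (D : category) (n : nat) := gen_choiceMixin (chain D n).

(* i-th face (i >= 1) of a chain starting at x, which keeps x *)
Fixpoint dface (D : category) (n i : nat) (x : Ob D) {struct n} :
    chainFrom x n.+1 -> chainFrom x n :=
  match n return chainFrom x n.+1 -> chainFrom x n with
  | 0 => fun _ => tt
  | n'.+1 => fun c =>
      let (y, p) := c in
      let (f, c') := p in
      match i with
      | 0 | 1 => let (z, q) := c' in let (g, c'') := q in
                 existT _ z (compm g f, c'')
      | i'.+1 => existT _ y (f, dface i' c')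
      end
  end.

(* i-th face map d_i : N_{n+1} -> N_n (deletes the i-th object, 0 <= i <= n+1) *)
Definition face (D : category) (n i : nat) (c : chain D n.+1) : chain D n :=
  match c with
  | existT x c0 =>
      match i with
      | 0 => let (y, p) := c0 in existT _ y p.2
      | _ => existT _ x (dface i c0)
      end
  end.

Fixpoint cfmap (D E : category) (F0 : Ob D -> Ob E)
    (F1 : forall x y, Hom x y -> Hom (F0 x) (F0 y)) (n : nat) (x : Ob D) {struct n} :
    chainFrom x n -> chainFrom (F0 x) n :=
  match n return chainFrom x n -> chainFrom (F0 x) n with
  | 0 => fun _ => tt
  | n'.+1 => fun c =>
      let (y, p) := c in
      let (f, c') := p in
      existT _ (F0 y) (F1 x y f, cfmap F1 c')
  end.

Definition chainmap (D E : category) (F0 : Ob D -> Ob E)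
    (F1 : forall x y, Hom x y -> Hom (F0 x) (F0 y)) (n : nat) (c : chain D n) :
    chain E n :=
  let (x, c0) := c in existT _ (F0 x) (cfmap F1 c0).

Definition Cn (k : fieldType) (D : category) (n : nat) : lmodType k := {malg k[chain D n]}.

Definition lin_ext (k : fieldType) (K : choiceType) (V : lmodType k) (f : K -> V)
    (g : {malg k[K]}) : V :=
  \sum_(x <- msupp g) g@_x *: f x.

Definition dC (k : fieldType) (D : category) (n : nat) : Cn k D n.+1 -> Cn k D n :=
  lin_ext (fun c : chain D n.+1 =>
    \sum_(i < n.+2) (-1) ^+ i *: (<< face i c >> : Cn k D n)).

(* kC-modules = functors C -> Vect_k                                    *)

Record premod (k : fieldType) (C : category) := PreMod {
  pm :> Ob C -> lmodType k;
  pact : forall x y, @Hom C x y -> pm x -> pm y }.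
Arguments pact {k C} _ {x y} _ _.

Definition islin (k : fieldType) (U V : lmodType k) (h : U -> V) : Prop :=
  forall (a : k) (u v : U), h (a *: u + v) = a *: h u + h v.

Definition IsModule (k : fieldType) (C : category) (M : premod k C) : Prop :=
  [/\ forall x y (f : Hom x y), islin (pact M f),
      forall x (v : M x), pact M (idm x) v = v &
      forall x y z (f : Hom x y) (g : Hom y z) (v : M x),
        pact M (compm g f) v = pact M g (pact M f v)].

Definition IsHom (k : fieldType) (C : category) (M N : premod k C)
    (phi : forall x, M x -> N x) : Prop :=
  (forall x, islin (phi x)) /\
  (forall x y (f : Hom x y) (v : M x), phi y (pact M f v) = pact N f (phi x v)).

Definition IsProjective (k : fieldType) (C : category) (P : premod k C) : Prop :=
  IsModule P /\
  forall (N L : premod k C) (p : forall x, N x -> L x) (h : forall x, P x -> L x),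
    IsModule N -> IsModule L -> IsHom p -> (forall x (l : L x), exists m, p x m = l) ->
    IsHom h ->
    exists g : forall x, P x -> N x, IsHom g /\ forall x v, p x (g x v) = h x v.

Definition IsProjResolution (k : fieldType) (C : category) (P : nat -> premod k C)
    (d : forall n x, P n.+1 x -> P n x) (M : premod k C)
    (eps : forall x, P 0 x -> M x) : Prop :=
  [/\ IsModule M,
      forall n, IsProjective (P n),
      forall n, IsHom (d n),
      IsHom eps &
      [/\ forall x (m : M x), exists v, eps x v = m,
          forall x (v : P 0 x), eps x v = 0 <-> exists u, d 0 x u = v &
          forall n x (v : P n.+1 x), d n x v = 0 <-> exists u, d n.+1 x u = v]].

Definition resF (k : fieldType) C1 C2 (th : functor C1 C2) (N : premod k C2) :
    premod k C1 :=
  @PreMod k C1 (fun x => N (fobj th x)) (fun x y f => pact N (fmap th f)).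

(* (L, eta) is a left Kan extension of M along theta, i.e. L = LK_theta(M)
   with unit eta : M -> L o theta (left adjoint of restriction) *)
Definition IsLeftKan (k : fieldType) C1 C2 (th : functor C1 C2) (M : premod k C1)
    (L : premod k C2) (eta : forall x, M x -> L (fobj th x)) : Prop :=
  [/\ IsModule L,
      @IsHom k C1 M (resF th L) eta &
      forall (N : premod k C2) (f : forall x, M x -> N (fobj th x)),
        IsModule N -> @IsHom k C1 M (resF th N) f ->
        exists g : forall w, L w -> N w,
          [/\ IsHom g,
              forall x v, g (fobj th x) (eta x v) = f x v &
              forall g' : forall w, L w -> N w, IsHom g' ->
                (forall x v, g' (fobj th x) (eta x v) = f x v) ->
                forall w v, g' w v = g w v]].

Definition kconst (k : fieldType) (C : category) : premod k C :=
  @PreMod k C (fun _ => k^o) (fun _ _ _ v => v).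

Definition post_ob C1 C2 (th : functor C1 C2) (w w' : Ob C2) (ga : Hom w w')
    (a : Ob (overcat th w)) : Ob (overcat th w') :=
  existT _ (projT1 a) (compm ga (projT2 a)).

Lemma post_hom_proof C1 C2 (th : functor C1 C2) (w w' : Ob C2) (ga : Hom w w')
    (a b : Ob (overcat th w)) (f : Hom a b) :
  projT2 (post_ob ga a) = compm (projT2 (post_ob ga b)) (fmap th (proj1_sig f)).
Proof. by case: f => f pf /=; rewrite -compA -pf. Qed.

Definition post_hom C1 C2 (th : functor C1 C2) (w w' : Ob C2) (ga : Hom w w')
    (a b : Ob (overcat th w)) (f : Hom a b) :
    @Hom (overcat th w') (post_ob ga a) (post_ob ga b) :=
  exist _ (proj1_sig f) (post_hom_proof ga f).

Definition Cmod (k : fieldType) C1 C2 (th : functor C1 C2) (n : nat) : premod k C2 :=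
  @PreMod k C2 (fun w => Cn k (overcat th w) n)
    (fun w w' ga => lin_ext (fun c : chain (overcat th w) n =>
        (<< chainmap (@post_hom C1 C2 th w w' ga) c >> : Cn k (overcat th w') n))).

Definition dCmod (k : fieldType) C1 C2 (th : functor C1 C2) (n : nat) (w : Ob C2) :
    Cmod k th n.+1 w -> Cmod k th n w := @dC k (overcat th w) n.

Definition etaF_ob C1 C2 (th : functor C1 C2) (x : Ob C1)
    (a : Ob (overcat (idF C1) x)) : Ob (overcat th (fobj th x)) :=
  existT _ (projT1 a) (fmap th (projT2 a)).

Lemma etaF_hom_proof C1 C2 (th : functor C1 C2) (x : Ob C1)
    (a b : Ob (overcat (idF C1) x)) (f : Hom a b) :
  projT2 (etaF_ob th a) = compm (projT2 (etaF_ob th b)) (fmap th (proj1_sig f)).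
Proof. by case: f => f pf /=; rewrite -fmapM -pf. Qed.

Definition etaF_hom C1 C2 (th : functor C1 C2) (x : Ob C1)
    (a b : Ob (overcat (idF C1) x)) (f : Hom a b) :
    @Hom (overcat th (fobj th x)) (etaF_ob th a) (etaF_ob th b) :=
  exist _ (proj1_sig f) (etaF_hom_proof th f).

(* the canonical map C_n(Id/x) -> C_n(theta/theta x) = (LK_theta C_n(Id/?))(theta x) *)
Definition etaC (k : fieldType) C1 C2 (th : functor C1 C2) (n : nat) (x : Ob C1) :
    Cmod k (idF C1) n x -> Cmod k th n (fobj th x) :=
  lin_ext (fun c : chain (overcat (idF C1) x) n =>
    (<< chainmap (@etaF_hom C1 C2 th x) c >> : Cn k (overcat th (fobj th x)) n)).

Definition augC (k : fieldType) C1 C2 (th : functor C1 C2) (L : premod k C2)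
    (eta : forall x, kconst k C1 x -> L (fobj th x)) (w : Ob C2) :
    Cmod k th 0 w -> L w :=
  lin_ext (fun c : chain (overcat th w) 0 =>
    pact L (projT2 (projT1 c)) (eta (projT1 (projT1 c)) 1)).

Arguments IsLeftKan {k C1 C2} th M L eta.
Arguments etaC k {C1 C2} th n x _.
Arguments dCmod k {C1 C2} th n w _.
Arguments IsProjResolution {k C} P d M eps.
Arguments augC k {C1 C2} th L eta w _.

(* Main.v *)
Require Import Defs.
From HB Require Import structures.
From mathcomp Require Import all_boot all_algebra.
From mathcomp Require Import boolp finmap.
From mathcomp.multinomials Require Import monalg.

Set Implicit Arguments.
Unset Strict Implicit.
Unset Printing Implicit Defensive.
Import GRing.Theory.
Local Open Scope ring_scope.

Lemma islin0 (k : fieldType) (U V : lmodType k) (h : U -> V) : islin h -> h 0 = 0.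
Proof.
move=> hl; have E := hl 1 0 0; rewrite !scale1r addr0 in E.
have : h 0 + h 0 = h 0 + 0 by rewrite addr0 -E.
by move/addrI.
Qed.

Lemma islinD (k : fieldType) (U V : lmodType k) (h : U -> V) : islin h ->
  forall u v, h (u + v) = h u + h v.
Proof. by move=> hl u v; have := hl 1 u v; rewrite !scale1r. Qed.

Lemma islinZ (k : fieldType) (U V : lmodType k) (h : U -> V) : islin h ->
  forall a u, h (a *: u) = a *: h u.
Proof. by move=> hl a u; have := hl a u 0; rewrite (islin0 hl) !addr0. Qed.

Lemma islin_sum (k : fieldType) (U V : lmodType k) (h : U -> V) (I : Type)
  (s : seq I) (F : I -> U) : islin h -> h (\sum_(i <- s) F i) = \sum_(i <- s) h (F i).
Proof.
move=> hl; elim: s => [|a s IH]; first by rewrite !big_nil islin0.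
by rewrite !big_cons islinD // IH.
Qed.

Lemma islin_comp (k : fieldType) (U V W : lmodType k) (h1 : V -> W) (h2 : U -> V) :
  islin h1 -> islin h2 -> islin (fun u => h1 (h2 u)).
Proof. by move=> l1 l2 a u v; rewrite l2 l1. Qed.

Lemma islin_id (k : fieldType) (U : lmodType k) : islin (fun u : U => u).
Proof. by []. Qed.

Lemma lin_ext_w (k : fieldType) (K : choiceType) (V : lmodType k) (f : K -> V)
  (g : {malg k[K]}) (d : {fset K}) :
  (msupp g `<=` d)%fset -> lin_ext f g = \sum_(x <- d) g@_x *: f x.
Proof.
move=> sd; rewrite /lin_ext; apply: big_fset_incl => // x _ xn.
by rewrite mcoeff_outdom // scale0r.
Qed.

Lemma lin_ext_lin (k : fieldType) (K : choiceType) (V : lmodType k) (f : K -> V) :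
  islin (lin_ext f).
Proof.
move=> a u v.
have su : (msupp u `<=` msupp u `|` msupp v)%fset by apply: fsubsetUl.
have sv : (msupp v `<=` msupp u `|` msupp v)%fset by apply: fsubsetUr.
have sw : (msupp (a *: u + v) `<=` msupp u `|` msupp v)%fset.
  apply: fsubset_trans (msuppD_le _ _) _; apply: fsetSU; exact: msuppZ_le.
rewrite (lin_ext_w _ sw) (lin_ext_w _ su) (lin_ext_w _ sv).
rewrite scaler_sumr -big_split /=; apply: eq_bigr => x _.
by rewrite mcoeffD mcoeffZ scalerDl scalerA.
Qed.

Lemma lin_extU (k : fieldType) (K : choiceType) (V : lmodType k) (f : K -> V) (c : K) :
  lin_ext f << c >> = f c.
Proof.
rewrite /lin_ext msuppU oner_eq0 big_seq_fset1 mcoeffUU scale1r //.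
Qed.

Lemma malgU_scale (k : fieldType) (K : choiceType) (a : k) (c : K) :
  << a *g c >> = a *: (<< c >> : {malg k[K]}).
Proof.
apply/malgP => x; rewrite mcoeffZ !mcoeffU; case: (c == x) => /=.
  by rewrite mulr1. by rewrite mulr0.
Qed.

Lemma lin_uniq (k : fieldType) (K : choiceType) (V : lmodType k) (h : {malg k[K]} -> V) :
  islin h -> forall g, h g = lin_ext (fun c => h << c >>) g.
Proof.
move=> hl g; rewrite {1}(monalgE g) islin_sum //; apply: eq_bigr => c _.
by rewrite malgU_scale islinZ.
Qed.

Lemma lin_ext_ext (k : fieldType) (K : choiceType) (V : lmodType k)
  (h1 h2 : {malg k[K]} -> V) : islin h1 -> islin h2 ->
  (forall c, h1 << c >> = h2 << c >>) -> forall g, h1 g = h2 g.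
Proof.
move=> l1 l2 E g; rewrite (lin_uniq l1) (lin_uniq l2).
by congr lin_ext; apply: functional_extensionality_dep => c; rewrite E.
Qed.

Fixpoint idfrom (D : category) (x : Ob D) (n : nat) : chainFrom x n :=
  match n return chainFrom x n with
  | 0 => tt
  | n'.+1 => existT _ x (idm x, idfrom x n')
  end.

Definition idchain (D : category) (x : Ob D) (n : nat) : chain D n :=
  existT _ x (idfrom x n).

Lemma chainFrom_disc (D : category) (hD : discrete D) n :
  forall (x : Ob D) (c : chainFrom x n), c = idfrom x n.
Proof.
elim: n => [|n IH] x c /=; first by case: c.
case: c => y [f c'].
have [e He] := hD x y f.
destruct e; simpl in He; subst f.
by rewrite (IH x c').
Qed.

Lemma chain_eq (D : category) (hD : discrete D) n (c : chain D n) :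
  c = idchain (projT1 c) n.
Proof. by case: c => x c /=; rewrite /idchain (chainFrom_disc hD c). Qed.

Lemma face_id (D : category) (hD : discrete D) n (a : Ob D) (i : nat) :
  face i (idchain a n.+1) = idchain a n.
Proof.
rewrite (chain_eq hD (face i (idchain a n.+1))).
have -> : projT1 (face i (idchain a n.+1)) = a by case: i.
by [].
Qed.

Lemma alt_sum (k : fieldType) m : \sum_(i < m) (-1 : k) ^+ i = (odd m)%:R.
Proof.
elim: m => [|m IH]; first by rewrite big_ord0.
rewrite big_ord_recr /= IH -signr_odd; case: (odd m) => /=.
  by rewrite expr1 addrN.
by rewrite expr0 add0r.
Qed.

Lemma dC_basis (k : fieldType) (D : category) (hD : discrete D) n (c : chain D n.+1) :
  @dC k D n << c >> = (odd n)%:R *: << idchain (projT1 c) n >>.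
Proof.
rewrite /dC lin_extU (chain_eq hD c).
under eq_bigr => i _ do rewrite face_id //.
by rewrite -scaler_suml alt_sum /= negbK.
Qed.

Lemma over_eq_proj C1 C2 (th : functor C1 C2) w (a b : overOb th w) (e : a = b) :
  proj1_sig (eq_rect a (fun c => @Defs.Hom (overcat th w) a c) (@idm (overcat th w) a) b e) =
  eq_rect (projT1 a) (fun c => Defs.Hom (projT1 a) c) (idm (projT1 a)) (projT1 b)
    (f_equal (@projT1 _ _) e).
Proof. by destruct e. Qed.

Lemma C1_disc C1 C2 (th : functor C1 C2) :
  (forall w, discrete (overcat th w)) -> discrete C1.
Proof.
move=> H x y f.
pose a : overOb th (fobj th y) := existT _ x (fmap th f).
pose b : overOb th (fobj th y) := existT _ y (idm (fobj th y)).
have pf : projT2 a = compm (projT2 b) (fmap th f) by rewrite /= comp1m.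
have [e He] := H _ a b (exist _ f pf).
exists (f_equal (@projT1 _ _) e).
by rewrite -(over_eq_proj e) He.
Qed.

Lemma over_disc C1 C2 (th : functor C1 C2) w :
  discrete C1 -> discrete (overcat th w).
Proof.
move=> hC [x al] [y al'] [be pf] /=.
simpl in be, pf.
have [e He] := hC x y be.
destruct e; simpl in He; subst be.
have E : al = al' by rewrite [in LHS]pf fmap1 compm1.
subst al'.
exists erefl => /=; exact: sig_eq.
Qed.

Lemma idover_ob C1 (hC : discrete C1) x (a : Ob (overcat (idF C1) x)) :
  a = existT (fun y => Defs.Hom (fobj (idF C1) y) x) x (idm x).
Proof.
case: a => y g.
have [e He] := hC y x g.
by destruct e; simpl in He; subst g.
Qed.

Lemma pactC_basis k C1 C2 (th : functor C1 C2) w w' (ga : Defs.Hom w w') n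
  (hD : discrete (overcat th w')) (c : chain (overcat th w) n) :
  pact (Cmod k th n) ga (<< c >> : Cn k (overcat th w) n)
  = << idchain (post_ob ga (projT1 c)) n >>.
Proof.
rewrite /= lin_extU; set c' := chainmap _ c.
by rewrite (chain_eq hD c'); case: c @c'.
Qed.

Lemma etaC_basis k C1 C2 (th : functor C1 C2) n x
  (hD : discrete (overcat th (fobj th x))) (c : chain (overcat (idF C1) x) n) :
  etaC k th n x (<< c >> : Cn k (overcat (idF C1) x) n)
  = << idchain (etaF_ob th (projT1 c)) n >>.
Proof.
rewrite /etaC lin_extU; set c' := chainmap _ c.
by rewrite (chain_eq hD c'); case: c @c'.
Qed.

Lemma post_ob_id C1 C2 (th : functor C1 C2) w (a : Ob (overcat th w)) :
  post_ob (idm w) a = a.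
Proof. by case: a => x al; rewrite /post_ob /= comp1m. Qed.

Lemma post_ob_comp C1 C2 (th : functor C1 C2) w w' w'' (f : Defs.Hom w w')
  (g : Defs.Hom w' w'') (a : Ob (overcat th w)) :
  post_ob (compm g f) a = post_ob g (post_ob f a).
Proof. by case: a => x al; rewrite /post_ob /= Defs.compA. Qed.

Lemma Cmod_module k C1 C2 (th : functor C1 C2) n
  (hD : forall w, discrete (overcat th w)) : IsModule (Cmod k th n).
Proof.
split.
- move=> x y f; exact: lin_ext_lin.
- move=> x; apply: (@lin_ext_ext k _ _ (fun v => pact (Cmod k th n) (idm x) v) (fun v => v)).
  + exact: lin_ext_lin.
  + exact: islin_id.
  + move=> c; rewrite pactC_basis // post_ob_id.
    by rewrite -(chain_eq (hD x) c).
- move=> x y z f g.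
  apply: (@lin_ext_ext k _ _ (fun v => pact (Cmod k th n) (compm g f) v)
            (fun v => pact (Cmod k th n) g (pact (Cmod k th n) f v))).
  + exact: lin_ext_lin.
  + apply: islin_comp; exact: lin_ext_lin.
  + by move=> c; rewrite !pactC_basis // post_ob_comp.
Qed.

Definition gext k C1 C2 (th : functor C1 C2) (N : premod k C2)
  (m : forall x, N (fobj th x)) n w : Cmod k th n w -> N w :=
  lin_ext (fun c : chain (overcat th w) n =>
    pact N (projT2 (projT1 c)) (m (projT1 (projT1 c)))).

Arguments gext {k C1 C2 th} N m n w _.

Definition ob C1 C2 (th : functor C1 C2) x : Ob (overcat th (fobj th x)) :=
  existT _ x (idm (fobj th x)).

Lemma gext_hom k C1 C2 (th : functor C1 C2) (N : premod k C2)
  (m : forall x, N (fobj th x)) n (hN : IsModule N)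
  (hD : forall w, discrete (overcat th w)) :
  @IsHom k C2 (Cmod k th n) N (gext N m n).
Proof.
split; first by move=> w; exact: lin_ext_lin.
move=> w w' ga.
have [hl _ hM] := hN.
apply: (@lin_ext_ext k _ _ (fun v => gext N m n w' (pact (Cmod k th n) ga v))
          (fun v => pact N ga (gext N m n w v))).
- apply: islin_comp; exact: lin_ext_lin.
- apply: islin_comp; [exact: hl | exact: lin_ext_lin].
- by move=> c; rewrite pactC_basis // /gext !lin_extU /= hM.
Qed.

Lemma gext_id k C1 C2 (th : functor C1 C2) (N : premod k C2)
  (m : forall x, N (fobj th x)) n (hN : IsModule N) x :
  gext N m n (fobj th x) (<< idchain (ob th x) n >> : Cn k _ n) = m x.
Proof. by rewrite /gext lin_extU /=; have [_ h1 _] := hN; rewrite h1. Qed.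

Lemma hom_gext k C1 C2 (th : functor C1 C2) (N : premod k C2) n
  (h : forall w, Cmod k th n w -> N w) (hh : IsHom h)
  (hD : forall w, discrete (overcat th w)) w v :
  h w v = gext N (fun x => h (fobj th x) (<< idchain (ob th x) n >> : Cn k _ n)) n w v.
Proof.
have [hl hn] := hh.
apply: (@lin_ext_ext k _ _ (h w) (gext N _ n w)); [exact: hl | exact: lin_ext_lin |].
move=> c; rewrite /gext lin_extU (chain_eq (hD w) c) /=.
case: (projT1 c) => x al /=.
transitivity (h w (pact (Cmod k th n) al (<< idchain (ob th x) n >> : Cn k _ n))).
  by rewrite pactC_basis // /post_ob /= compm1.
by rewrite hn.
Qed.

Lemma islin_scale (k : fieldType) (U : lmodType k) (a : k) : islin (fun u : U => a *: u).
Proof. by move=> b u v; rewrite scalerDr !scalerA mulrC. Qed.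

Lemma Cmod_kan k C1 C2 (th : functor C1 C2) (H : forall w, discrete (overcat th w)) n :
  IsLeftKan th (Cmod k (idF C1) n) (Cmod k th n) (etaC k th n).
Proof.
have hC := C1_disc H.
have hI : forall x, discrete (overcat (idF C1) x) := fun x => @over_disc _ _ (idF C1) x hC.
split.
- exact: Cmod_module.
- split; first by move=> x; exact: lin_ext_lin.
  move=> x y f.
  apply: (@lin_ext_ext k _ _ (fun v => etaC k th n y (pact (Cmod k (idF C1) n) f v))
    (fun v => pact (Cmod k th n) (fmap th f) (etaC k th n x v))).
  + apply: islin_comp; exact: lin_ext_lin.
  + apply: islin_comp; exact: lin_ext_lin.
  + move=> c; rewrite pactC_basis // etaC_basis // etaC_basis // pactC_basis //=.
    by case: (projT1 c) => z g; rewrite /etaF_ob /post_ob /= fmapM.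
- move=> N f hN hf.
  exists (gext N (fun x => f x (<< idchain (ob (idF C1) x) n >> : Cn k _ n)) n).
  split.
  + exact: gext_hom.
  + move=> x.
    apply: (@lin_ext_ext k _ _
      (fun v => gext N (fun x => f x (<< idchain (ob (idF C1) x) n >> : Cn k _ n)) n
                  (fobj th x) (etaC k th n x v)) (f x)).
    * apply: islin_comp; exact: lin_ext_lin.
    * exact: hf.1.
    * move=> c; rewrite etaC_basis // (chain_eq (hI x) c) /=.
      rewrite (idover_ob hC (projT1 c)).
      have -> : etaF_ob th (existT (fun y => Defs.Hom (fobj (idF C1) y) x) x (idm x))
                = ob th x by rewrite /etaF_ob /ob /= fmap1.
      by rewrite gext_id.
  + move=> g' hg' hg'e w v.
    rewrite (hom_gext hg' H); congr (gext N _ n w v).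
    apply: functional_extensionality_dep => x.
    rewrite -hg'e etaC_basis //=.
    by rewrite /etaF_ob /ob /= fmap1.
Qed.

Lemma d_eta k C1 C2 (th : functor C1 C2) (H : forall w, discrete (overcat th w)) n x
  (v : Cmod k (idF C1) n.+1 x) :
  dCmod k th n (fobj th x) (etaC k th n.+1 x v) = etaC k th n x (dCmod k (idF C1) n x v).
Proof.
have hC := C1_disc H.
have hI : forall x, discrete (overcat (idF C1) x) := fun x => @over_disc _ _ (idF C1) x hC.
apply: (@lin_ext_ext k _ _ (fun v => dCmod k th n (fobj th x) (etaC k th n.+1 x v))
   (fun v => etaC k th n x (dCmod k (idF C1) n x v))).
- apply: islin_comp; exact: lin_ext_lin.
- apply: islin_comp; exact: lin_ext_lin.
- move=> c; rewrite etaC_basis // /dCmod !dC_basis //.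
  by rewrite islinZ; [rewrite etaC_basis | exact: lin_ext_lin].
Qed.

Lemma Cmod_proj k C1 C2 (th : functor C1 C2) (H : forall w, discrete (overcat th w)) n :
  IsProjective (Cmod k th n).
Proof.
split; first exact: Cmod_module.
move=> N L p h hN hL hp hs hh.
pose m := fun x => proj1_sig (constructive_indefinite_description
   (hs (fobj th x) (h (fobj th x) (<< idchain (ob th x) n >> : Cn k _ n)))).
exists (gext N m n); split; first exact: gext_hom.
move=> w v; rewrite (hom_gext hh H).
apply: (@lin_ext_ext k _ _ (fun v => p w (gext N m n w v)) (gext L _ n w)).
- apply: islin_comp; [exact: hp.1 | exact: lin_ext_lin].
- exact: lin_ext_lin.
- move=> c; rewrite /gext !lin_extU /= hp.2; congr (pact L _ _).
  by rewrite /m; case: constructive_indefinite_description.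
Qed.

Lemma dC_hom k C1 C2 (th : functor C1 C2) (H : forall w, discrete (overcat th w)) n :
  @IsHom k C2 (Cmod k th n.+1) (Cmod k th n) (dCmod k th n).
Proof.
split; first by move=> w; exact: lin_ext_lin.
move=> w w' ga.
apply: (@lin_ext_ext k _ _ (fun v => dCmod k th n w' (pact (Cmod k th n.+1) ga v))
   (fun v => pact (Cmod k th n) ga (dCmod k th n w v))).
- apply: islin_comp; exact: lin_ext_lin.
- apply: islin_comp; exact: lin_ext_lin.
- move=> c; rewrite pactC_basis // /dCmod !dC_basis //.
  by rewrite islinZ; [rewrite pactC_basis | exact: lin_ext_lin].
Qed.

Definition Rl k (D : category) n : Cn k D n.+1 -> Cn k D n :=
  lin_ext (fun c : chain D n.+1 => (<< idchain (projT1 c) n >> : Cn k D n)).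
Definition Ru k (D : category) n : Cn k D n -> Cn k D n.+1 :=
  lin_ext (fun c : chain D n => (<< idchain (projT1 c) n.+1 >> : Cn k D n.+1)).

Lemma dC_Rl k (D : category) (hD : discrete D) n v :
  @dC k D n v = (odd n)%:R *: Rl v.
Proof.
apply: (@lin_ext_ext k _ _ (@dC k D n) (fun v => (odd n)%:R *: Rl v)).
- exact: lin_ext_lin.
- apply: islin_comp; [exact: islin_scale | exact: lin_ext_lin].
- by move=> c; rewrite dC_basis // /Rl lin_extU.
Qed.

Lemma RlRu k (D : category) (hD : discrete D) n v : @Rl k D n (Ru v) = v.
Proof.
apply: (@lin_ext_ext k _ _ (fun v => @Rl k D n (Ru v)) (fun v => v)).
- apply: islin_comp; exact: lin_ext_lin.
- exact: islin_id.
- by move=> c; rewrite /Ru /Rl !lin_extU /= -(chain_eq hD c).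
Qed.

Lemma RuRl k (D : category) (hD : discrete D) n v : @Ru k D n (Rl v) = v.
Proof.
apply: (@lin_ext_ext k _ _ (fun v => @Ru k D n (Rl v)) (fun v => v)).
- apply: islin_comp; exact: lin_ext_lin.
- exact: islin_id.
- by move=> c; rewrite /Ru /Rl !lin_extU /= -(chain_eq hD c).
Qed.

Lemma exact_disc k (D : category) (hD : discrete D) n (v : Cn k D n.+1) :
  @dC k D n v = 0 <-> exists u, @dC k D n.+1 u = v.
Proof.
have d0 : forall m, @dC k D m 0 = 0 by move=> m; apply: islin0; exact: lin_ext_lin.
case On : (odd n).
- split.
  + rewrite dC_Rl // On scale1r => Rv; exists 0; rewrite d0.
    by rewrite -(RuRl hD v) Rv islin0 //; exact: lin_ext_lin.
  + case=> u <-; rewrite [@dC k D n.+1 u]dC_Rl //= On /= scale0r; exact: d0.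
- split.
  + move=> _; exists (Ru v); by rewrite dC_Rl //= On /= scale1r RlRu.
  + by move=> _; rewrite dC_Rl // On scale0r.
Qed.

Theorem lemma2p3p2 (k : fieldType) (C1 C2 : category) (th : functor C1 C2) :
  (forall w : Ob C2, discrete (overcat th w)) ->
  [/\ (forall n : nat, IsLeftKan th (Cmod k (idF C1) n) (Cmod k th n) (etaC k th n)),
      (forall (n : nat) (x : Ob C1) (v : Cmod k (idF C1) n.+1 x),
         dCmod k th n (fobj th x) (etaC k th n.+1 x v)
         = etaC k th n x (dCmod k (idF C1) n x v)) &
      forall (L : premod k C2) (eta : forall x, kconst k C1 x -> L (fobj th x)),
        IsLeftKan th (kconst k C1) L eta ->
        IsProjResolution (Cmod k th) (dCmod k th) L (augC k th L eta)].
Proof.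
move=> H; have hC := C1_disc H.
split.
- move=> n; exact: Cmod_kan.
- move=> n x v; exact: d_eta.
move=> L eta [hL heta hU].
have hM0 := @Cmod_module k _ _ th 0 H.
have hAug : @IsHom k C2 (Cmod k th 0) L (augC k th L eta)
  := @gext_hom k _ _ th L (fun x => eta x 1) 0 hL H.
have augE : augC k th L eta = gext L (fun x => eta x 1) 0 by [].
pose f0 := fun x (v : kconst k C1 x) =>
  ((v : k) *: (<< idchain (ob th x) 0 >> : Cn k _ 0) : Cmod k th 0 (fobj th x)).
have hf0 : @IsHom k C1 (kconst k C1) (resF th (Cmod k th 0)) f0.
  split.
  - by move=> x a u v; rewrite /f0 scalerDl scalerA.
  - move=> x y ph v.
    have [e He] := hC x y ph; destruct e; simpl in He; subst ph.
    have [_ hid _] := hM0.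
    change (f0 x v = pact (Cmod k th 0) (fmap th (idm x)) (f0 x v)).
    by rewrite fmap1 hid.
have [g [hg hge _]] := hU (Cmod k th 0) f0 hM0 hf0.
have [g1 [_ _ hu1]] := hU L eta hL heta.
have hidL : @IsHom k C2 L L (fun w v => v) by split => //.
have id1 : forall w v, v = g1 w v by apply: hu1 hidL _.
have hcomp : @IsHom k C2 L L (fun w v => augC k th L eta w (g w v)).
  split.
  - move=> w; apply: islin_comp; [exact: hAug.1 | exact: hg.1].
  - by move=> w w' ga v; rewrite hg.2 hAug.2.
have comp1 : forall w v, augC k th L eta w (g w v) = g1 w v.
  apply: hu1 hcomp _ => x v.
  rewrite hge /f0 islinZ; last exact: hAug.1.
  rewrite augE gext_id //.
  have := islinZ (heta.1 x) v 1; rewrite /= => <-.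
  by congr (eta x _); rewrite /GRing.scale /= mulr1.
have inj : forall w v, g w (augC k th L eta w v) = v.
  move=> w.
  apply: (@lin_ext_ext k _ _ (fun v => g w (augC k th L eta w v)) (fun v => v)).
  - apply: islin_comp; [exact: hg.1 | exact: hAug.1].
  - exact: islin_id.
  - move=> c; rewrite augE /gext lin_extU /= hg.2 hge /f0 scale1r.
    rewrite pactC_basis // (chain_eq (H w) c) /=.
    by case: (projT1 c) => x al; rewrite /post_ob /ob /= compm1.
split.
- exact: hL.
- move=> n; exact: Cmod_proj.
- move=> n; exact: dC_hom.
- exact: hAug.
split.
- by move=> x m; exists (g x m); rewrite comp1 -id1.
- move=> x v; split.
  + move=> ev; exists 0.
    rewrite -(inj x v) ev (islin0 (hg.1 x)).
    apply: islin0; exact: lin_ext_lin.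
  + case=> u <-; rewrite /dCmod (dC_Rl (H x)) /= scale0r.
    apply: islin0; exact: hAug.1.
- move=> n x v; exact: exact_disc.
Qed.
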